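(* Let $G$ be a finite graph with vertices $v_1,\ldots,v_n$, and let $H$ be obtained from $G$ by substituting complete graphs for the vertices of $G$; that is, $V(H)=C_1\cup\cdots\cup C_n$ is a partition into non-empty sets, each $C_i$ induces a complete graph in $H$, and for distinct $i,j$ and $x\in C_i$, $y\in C_j$ we have $xy\in E(H)$ if and only if $v_iv_j\in E(G)$. Then there is a one-to-one correspondence between the minimal chordal completions of $G$ and the minimal chordal completions of $H$.
   Context: A graph is chordal if it has no induced cycle of length at least four. A chordal completion of a graph $G=(V,E)$ is a chordal graph $G'=(V,E')$ with $E\subseteq E'$; it is minimal if no proper subgraph of $G'$ (on vertex set $V$) is a chordal completion of $G$. *)

(* Defs.v *)
From mathcomp Require Import all_boot.
Set Implicit Arguments. Unset Strict Implicit. Unset Printing Implicit Defensive.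

Section Graphs.
Variable T : finType.

Definition simple_graph (e : rel T) : Prop := symmetric e /\ irreflexive e.

Definition induced_cycle (e : rel T) (k : nat) (c : 'I_k -> T) : Prop :=
  [/\ 4 <= k, injective c &
    forall i j : 'I_k,
      e (c i) (c j) = (val j == i.+1 %% k) || (val i == j.+1 %% k)].

Definition chordal (e : rel T) : Prop :=
  forall (k : nat) (c : 'I_k -> T), ~ induced_cycle e c.

Definition chordal_completion (e e' : rel T) : Prop :=
  simple_graph e' /\ subrel e e' /\ chordal e'.

Definition minimal_chordal_completion (e e' : rel T) : Prop :=
  chordal_completion e e' /\
  forall e'', chordal_completion e e'' -> subrel e'' e' -> subrel e' e''.

End Graphs.

(* H obtained from G by substituting complete graphs for the vertices:
   p x = i means x \in C_i. *)
Definition substitute_cliques (V W : finType) (eG : rel V) (p : W -> V) : rel W :=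
  fun x y => (x != y) && ((p x == p y) || eG (p x) (p y)).

(* Main.v *)
Require Import Defs.
From mathcomp Require Import all_boot zify.
From Stdlib Require Import Classical.
Set Implicit Arguments. Unset Strict Implicit. Unset Printing Implicit Defensive.

Definition adjk k i j := (j == i.+1) || (i == j.+1) || ((i == 0) && (j == k.-1)) || ((j == 0) && (i == k.-1)).

Lemma modS_eq k i : i < k -> i.+1 %% k = if i.+1 < k then i.+1 else 0.
Proof.
move=> Hi; case: ltnP => h; first by rewrite modn_small.
have -> : i.+1 = k by lia.
by rewrite modnn.
Qed.

Lemma modadj k i j : i < k -> j < k -> ((j == i.+1 %% k) || (i == j.+1 %% k)) = adjk k i j.
Proof.
move=> Hi Hj; rewrite !modS_eq //; rewrite /adjk.
by case: ifP => h1; case: ifP => h2; lia.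
Qed.

Section Cyc.
Variable T : finType.

Definition ncyc (e : rel T) k (c : nat -> T) :=
  [/\ 4 <= k, (forall i j, i < k -> j < k -> c i = c j -> i = j) &
      (forall i j, i < k -> j < k -> e (c i) (c j) = adjk k i j)].

Lemma ncyc_not_chordal e k c : ncyc e k c -> ~ chordal e.
Proof.
case=> H4 Hinj Hadj Hch.
apply: (Hch k (fun i : 'I_k => c (val i))); split => //.
  by move=> i j /(Hinj _ _ (ltn_ord i) (ltn_ord j)) /val_inj.
move=> i j /=; rewrite Hadj // -modadj //.
Qed.

Lemma ic_ncyc e k (c : 'I_k -> T) : induced_cycle e c -> exists c', ncyc e k c'.
Proof.
case=> H4 Hinj Hadj.
have x0 : 'I_k by exists 0; lia.
exists (fun n => c (insubd x0 n)); split => //.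
  move=> i j Hi Hj /Hinj /(congr1 val); by rewrite !val_insubd Hi Hj.
move=> i j Hi Hj; rewrite Hadj !val_insubd Hi Hj modadj //.
Qed.

Lemma rot_ncyc e k c r : r <= k -> ncyc e k c ->
  ncyc e k (fun n => if n + r < k then c (n + r) else c (n + r - k)).
Proof.
move=> Hr [H4 Hinj Hadj]; split => //.
  move=> i j Hi Hj; case: ifP => h1; case: ifP => h2 /Hinj; lia.
move=> i j Hi Hj; case: ifP => h1; case: ifP => h2; rewrite Hadj; try lia;
  rewrite /adjk; lia.
Qed.

Lemma twin_cyc e k c i j : symmetric e -> ncyc e k c -> i < k -> j < k -> i != j ->
  e (c i) (c j) ->
  (forall z, z != c i -> z != c j -> e (c i) z = e (c j) z) -> False.
Proof.
move=> Hsym [H4 Hinj Hadj] Hi Hj Hij Heij Htw.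
have aux : forall l, l < k -> l != i -> l != j -> adjk k i l -> ~~ adjk k j l -> False.
  move=> l Hl Hli Hlj A1 A2.
  have := Htw (c l).
  rewrite !Hadj // (negbTE A2) A1.
  have N1 : c l != c i by apply/eqP=> /Hinj E; move: Hli; rewrite E //; lia.
  have N2 : c l != c j by apply/eqP=> /Hinj E; move: Hlj; rewrite E //; lia.
  by move=> /(_ N1 N2).
have aux2 : forall l, l < k -> l != i -> l != j -> adjk k j l -> ~~ adjk k i l -> False.
  move=> l Hl Hli Hlj A1 A2.
  have := Htw (c l).
  rewrite !Hadj // (negbTE A2) A1.
  have N1 : c l != c i by apply/eqP=> /Hinj E; move: Hli; rewrite E //; lia.
  have N2 : c l != c j by apply/eqP=> /Hinj E; move: Hlj; rewrite E //; lia.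
  by move=> /(_ N1 N2).
move: Heij; rewrite Hadj // /adjk.
case/orP=> [/orP[/orP[/eqP E|/eqP E]|/andP[/eqP E1 /eqP E2]]|/andP[/eqP E1 /eqP E2]].
- case: (posnP i) => hi.
    by apply: (aux k.-1); rewrite ?/adjk; lia.
  by apply: (aux i.-1); rewrite ?/adjk; lia.
- case: (posnP j) => hj.
    by apply: (aux2 k.-1); rewrite ?/adjk; lia.
  by apply: (aux2 j.-1); rewrite ?/adjk; lia.
- by apply: (aux 1); rewrite ?/adjk; lia.
- by apply: (aux2 1); rewrite ?/adjk; lia.
Qed.

End Cyc.

Section Paths.
Variable T : finType.
Variable K : rel T.
Hypothesis Kch : chordal K.
Hypothesis Ksym : symmetric K.
Hypothesis Kirr : irreflexive K.

Definition npath m (q : nat -> T) :=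
  (forall s t, s <= m -> t <= m -> q s = q t -> s = t) /\
  (forall s t, s <= m -> t <= m -> K (q s) (q t) = (t == s.+1) || (s == t.+1)).

Lemma lemA m q w : npath m q -> 2 <= m -> (forall t, t <= m -> q t != w) ->
  K w (q 0) -> K w (q m) -> exists t, 0 < t < m /\ K w (q t).
Proof.
move=> [Qinj Qadj] Hm Hw H0 Hm'.
case: (boolP [exists t : 'I_m, (0 < t) && K w (q t)]).
  by case/existsP=> t /andP[t0 Kt]; exists t; split => //; rewrite t0 ltn_ord.
move=> Hno; exfalso.
have Kw : forall t, t <= m -> K w (q t) = (t == 0) || (t == m).
  move=> t Ht; case: t Ht => [|t] Ht; first by rewrite H0.
  case: (ltnP t.+1 m) => tm; last first.
    have E : t.+1 = m by lia.
    by rewrite E Hm' eqxx orbT.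
  have -> : (t.+1 == m) = false by lia.
  apply/negbTE/negP => Kt; case/negP: Hno; apply/existsP; exists (Ordinal tm) => /=.
  by rewrite Kt.
apply: (@ncyc_not_chordal _ K m.+2 (fun n => if n <= m then q n else w)) => //.
split; first lia.
  move=> i j Hi Hj; case: ifP => h1; case: ifP => h2.
  - exact: Qinj.
  - by move=> E; move: (Hw i); rewrite E eqxx => /(_ (idP h1)).
  - by move=> E; move: (Hw j); rewrite E eqxx => /(_ (idP h2)).
  - lia.
move=> i j Hi Hj; case: ifP => h1; case: ifP => h2.
- rewrite Qadj // /adjk; lia.
- rewrite Ksym Kw // /adjk; lia.
- rewrite Kw // /adjk; lia.
- rewrite Kirr /adjk; lia.
Qed.

Lemma lemB n q b b' : npath n q -> 1 <= n -> b != b' -> K b b' ->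
  (forall t, t <= n -> (q t != b) && (q t != b')) ->
  (forall t, t <= n -> K b' (q t) = (t == 0)) ->
  (forall t, t <= n -> K b (q t) = (t == n)) -> False.
Proof.
move=> [Qinj Qadj] Hn Hbb Kbb Hav Hb' Hb.
apply: (@ncyc_not_chordal _ K n.+3
   (fun u => if u <= n then q u else if u == n.+1 then b else b')) => //.
split; first lia.
  move=> i j Hi Hj.
  case: (boolP (i <= n)) => h1; case: (boolP (j <= n)) => h2;
  case: (boolP (i == n.+1)) => h3; case: (boolP (j == n.+1)) => h4;
  rewrite ?h1 ?h2 ?h3 ?h4 /=; try (exact: Qinj); try lia;
  try (by move=> E; move: (Hav i h1); rewrite E eqxx ?andbF);
  try (by move=> E; move: (Hav j h2); rewrite E eqxx ?andbF);
  try (by move=> E; move: Hbb; rewrite E eqxx).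
move=> i j Hi Hj.
case: (boolP (i <= n)) => h1; case: (boolP (j <= n)) => h2;
case: (boolP (i == n.+1)) => h3; case: (boolP (j == n.+1)) => h4;
rewrite ?h1 ?h2 ?h3 ?h4 /=; try (rewrite Qadj // /adjk; lia);
try (rewrite Ksym Hb // /adjk; lia); try (rewrite Ksym Hb' // /adjk; lia);
try (rewrite Hb // /adjk; lia); try (rewrite Hb' // /adjk; lia);
try (rewrite Kirr /adjk; lia); try (rewrite Kbb /adjk; lia);
try (rewrite Ksym Kbb /adjk; lia).
Qed.


Lemma lemD m q b b' i j : npath m q -> b != b' -> K b b' ->
  (forall t, t <= m -> (q t != b) && (q t != b')) ->
  (forall t, 0 < t < m -> ~~ (K b (q t) && K b' (q t))) ->
  0 < i -> i < j -> j < m -> K b' (q i) -> K b (q j) -> False.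
Proof.
move=> [Qinj Qadj] Hbb Kbb Hav Hint Hi Hij Hj Kbi Kbj.
pose P := fun s => (i <= s < j) && K b' (q s).
have exP : exists s, P s by exists i; rewrite /P Kbi leqnn Hij.
have ubP : forall s, P s -> s <= j by move=> s /andP[/andP[_ h] _]; lia.
case: (ex_maxnP exP ubP) => s /andP[/andP[iS sj] Ks] smax.
pose Q := fun t => (s < t <= j) && K b (q t).
have exQ : exists t, Q t by exists j; rewrite /Q Kbj sj leqnn.
case: (ex_minnP exQ) => t /andP[/andP[st tj] Kt] tmin.
apply: (@lemB (t - s) (fun u => q (s + u)) b b').
- split.
    move=> u v Hu Hv E; have := Qinj (s+u) (s+v) ltac:(lia) ltac:(lia) E; lia.
  move=> u v Hu Hv; rewrite Qadj; lia.
- lia.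
- exact: Hbb.
- exact: Kbb.
- move=> u Hu; apply: Hav; lia.
- move=> u Hu; case: u Hu => [|u] Hu; first by rewrite addn0 Ks.
  apply/negbTE/negP => Ku.
  case: (ltnP (s + u.+1) j) => h.
    have := smax (s + u.+1); rewrite /P Ku h andbT => /(_ ltac:(lia)); lia.
  have E : s + u.+1 = j by lia.
  have := Hint j; rewrite Kbj -E Ku /= => /(_ ltac:(lia)); done.
- move=> u Hu; case: (ltnP u (t - s)) => h; last first.
    have E : s + u = t by lia.
    by rewrite E Kt; apply/esym/eqP; lia.
  have -> : (u == t - s) = false by lia.
  apply/negbTE/negP => Ku.
  case: u Hu h Ku => [|u] Hu h Ku.
    have := Hint s; rewrite addn0 in Ku; rewrite Ku Ks /= => /(_ ltac:(lia)); done.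
  have := tmin (s + u.+1); rewrite /Q Ku andbT => /(_ ltac:(lia)); lia.
Qed.

Lemma lemC m q b b' : npath m q -> 2 <= m -> b != b' -> K b b' ->
  (forall t, t <= m -> (q t != b) && (q t != b')) ->
  K b (q 0) -> K b (q m) -> K b' (q 0) -> K b' (q m) ->
  (forall t, 0 < t < m -> ~~ (K b (q t) && K b' (q t))) -> False.
Proof.
move=> Hp Hm Hbb Kbb Hav Kb0 Kbm Kb'0 Kb'm Hint.
have [i [/andP[i0 im] Ki]] : exists t, 0 < t < m /\ K b' (q t).
  apply: lemA => // t Ht; by case/andP: (Hav t Ht).
have [j [/andP[j0 jm] Kj]] : exists t, 0 < t < m /\ K b (q t).
  apply: lemA => // t Ht; by case/andP: (Hav t Ht).
case: (ltngtP i j) => h.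
- exact: (lemD Hp Hbb Kbb Hav Hint i0 h jm Ki Kj).
- apply: (@lemD m q b' b j i Hp _ _ _ _ j0 h im Kj Ki).
  + by rewrite eq_sym.
  + by rewrite Ksym.
  + by move=> t Ht; rewrite andbC; apply: Hav.
  + by move=> t Ht; rewrite andbC; apply: Hint.
- by move: (Hint i); rewrite i0 im Ki h Kj => /(_ isT).
Qed.

End Paths.

Section Shrink.
Variable T : finType.
Variable K : rel T.
Hypothesis Kch : chordal K.
Hypothesis Ksym : symmetric K.
Hypothesis Kirr : irreflexive K.

Lemma case3 (e3 : rel T) k c b b' ib : b != b' -> K b b' ->
  (forall z w, z != b -> z != b' -> w != b -> w != b' -> e3 z w = K z w) ->
  (forall z, z != b -> z != b' -> e3 b z = K b z && K b' z) ->
  ncyc e3 k c -> ib < k -> c ib = b -> (forall i, i < k -> c i != b') -> False.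
Proof.
move=> Hbb Kbb H1 H2 Hc Hib Hcb Hnb'.
have Hr : ib.+1 <= k by [].
have Hc' := rot_ncyc Hr Hc.
set c' := (fun n => _) in Hc'.
case: Hc' => [H4 Cinj Cadj].
have Cb : c' k.-1 = b.
  rewrite /c'; have -> : (k.-1 + ib.+1 < k) = false by lia.
  by have -> : k.-1 + ib.+1 - k = ib by lia.
have Cnb' : forall n, n < k -> c' n != b'.
  move=> n Hn; rewrite /c'; case: ifP => h; apply: Hnb'; lia.
have Cnb : forall n, n < k.-1 -> c' n != b.
  move=> n Hn; apply/eqP => E; have := Cinj n k.-1 ltac:(lia) ltac:(lia).
  rewrite E Cb => /(_ erefl); lia.
have Hav : forall t, t <= k.-2 -> (c' t != b) && (c' t != b').
  move=> t Ht; rewrite Cnb ?Cnb' //; lia.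
have Hpath : npath K k.-2 c'.
  split.
    move=> s t Hs Ht; apply: Cinj; lia.
  move=> s t Hs Ht; case/andP: (Hav s Hs) => h1 h2; case/andP: (Hav t Ht) => h3 h4.
  rewrite -H1 // Cadj /adjk; lia.
have Kb : forall t, t <= k.-2 -> K b (c' t) && K b' (c' t) = adjk k k.-1 t.
  move=> t Ht; case/andP: (Hav t Ht) => h1 h2.
  by rewrite -H2 // -Cb Cadj //; lia.
have KB0 : K b (c' 0) && K b' (c' 0) by rewrite Kb /adjk; lia.
have KBm : K b (c' k.-2) && K b' (c' k.-2) by rewrite Kb /adjk; lia.
case/andP: KB0 => K1 K2; case/andP: KBm => K3 K4.
apply: (@lemC _ K Kch Ksym Kirr k.-2 c' b b' Hpath) => //.
- lia.
- move=> t Ht; rewrite Kb /adjk; lia.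
Qed.


Definition inA (a a' z : T) := (z == a) || (z == a').
Definition shrink a a' : rel T := fun x y =>
  K x y && (inA a a' x ==> (inA a a' y || (K a y && K a' y)))
        && (inA a a' y ==> (inA a a' x || (K a x && K a' x))).

Lemma shrink_out a a' z w : z != a -> z != a' -> w != a -> w != a' -> shrink a a' z w = K z w.
Proof.
by move=> h1 h2 h3 h4; rewrite /shrink /inA (negbTE h1) (negbTE h2) (negbTE h3) (negbTE h4) !andbT.
Qed.

Lemma shrink_a a a' z : z != a -> z != a' -> shrink a a' a z = K a z && K a' z.
Proof.
move=> h1 h2; rewrite /shrink /inA (negbTE h1) (negbTE h2) eqxx /=.
by case: (K a z); case: (K a' z).
Qed.

Lemma shrink_a' a a' z : z != a -> z != a' -> shrink a a' a' z = K a' z && K a z.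
Proof.
move=> h1 h2; rewrite /shrink /inA (negbTE h1) (negbTE h2) eqxx orbT /=.
by case: (K a z); case: (K a' z).
Qed.

Lemma shrink_sym a a' : symmetric (shrink a a').
Proof. by move=> x y; rewrite /shrink Ksym andbAC. Qed.

Lemma shrink_sub a a' : subrel (shrink a a') K.
Proof. by move=> x y /andP[/andP[]]. Qed.

Lemma shrink_chordal a a' : a != a' -> K a a' -> chordal (shrink a a').
Proof.
move=> Haa Kaa k c /ic_ncyc [c' Hc].
have Hc0 := Hc; case: Hc0 => [H4 Cinj Cadj].
case: (boolP [exists i : 'I_k, c' i == a]) => [/existsP[ia /eqP Ea]|Na];
case: (boolP [exists i : 'I_k, c' i == a']) => [/existsP[ia' /eqP Ea']|Na'].
- apply: (@twin_cyc _ (shrink a a') k c' ia ia' (@shrink_sym a a') Hc) => //.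
  + apply/negP => /eqP /val_inj E; move: Haa; by rewrite -Ea -Ea' E eqxx.
  + by rewrite Ea Ea' /shrink /inA Kaa !eqxx ?orbT.
  + move=> z; rewrite Ea Ea' => h1 h2; rewrite shrink_a ?shrink_a' 1?andbC //;
      by rewrite eq_sym.
- apply: (@case3 (shrink a a') k c' a a' ia Haa Kaa) => //.
  + exact: shrink_out.
  + exact: shrink_a.
  + move=> i Hi; apply/eqP => E; case/negP: Na'; apply/existsP; exists (Ordinal Hi).
    by rewrite E.
- apply: (@case3 (shrink a a') k c' a' a ia' _ _) => //.
  + by rewrite eq_sym.
  + by rewrite Ksym.
  + by move=> z w h1 h2 h3 h4; apply: shrink_out.
  + by move=> z h1 h2; rewrite shrink_a'.
  + move=> i Hi; apply/eqP => E; case/negP: Na; apply/existsP; exists (Ordinal Hi).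
    by rewrite E.
- apply: (@ncyc_not_chordal _ K k c') => //; split => // i j Hi Hj.
  have nA : forall n, n < k -> (c' n != a) && (c' n != a').
    move=> n Hn; apply/andP; split; apply/eqP => E.
      by case/negP: Na; apply/existsP; exists (Ordinal Hn); rewrite E.
    by case/negP: Na'; apply/existsP; exists (Ordinal Hn); rewrite E.
  case/andP: (nA i Hi) => h1 h2; case/andP: (nA j Hj) => h3 h4.
  by rewrite -(@shrink_out a a') // Cadj.
Qed.

End Shrink.

Lemma chordal_ext (T : finType) (e e' : rel T) : chordal e -> e =2 e' -> chordal e'.
Proof.
move=> Hc E k c [H4 Hinj Hadj]; apply: (Hc k c); split => // i j.
by rewrite E.
Qed.

Lemma exists_min (T : finType) (e e1 : rel T) : chordal_completion e e1 ->
  exists e0, minimal_chordal_completion e e0 /\ subrel e0 e1.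
Proof.
move Hn : #|[set xy : T * T | e1 xy.1 xy.2]| => n.
elim: n {-2}n (leqnn n) e1 Hn => [|n IH] n0 Hn0 e1 Hn Hcc.
all: case: (classic (forall e'', chordal_completion e e'' -> subrel e'' e1 -> subrel e1 e''))
  => Hmin; first by exists e1; split => //; split.
all: have [e'' H''] := not_all_ex_not _ _ Hmin.
all: have [Hcc'' H''2] := imply_to_and _ _ H''.
all: have [Hsub H''3] := imply_to_and _ _ H''2.
all: have [x Hx] := not_all_ex_not _ _ H''3.
all: have [y Hy] := not_all_ex_not _ _ Hx.
all: have [Exy NExy] := imply_to_and _ _ Hy.
all: have Hlt : #|[set xy : T * T | e'' xy.1 xy.2]| < #|[set xy : T * T | e1 xy.1 xy.2]|.
all: try (apply: proper_card; apply/properP; split;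
  [apply/subsetP => z; rewrite !inE; exact: Hsub
  | exists (x, y); rewrite !inE //=; by apply/negP]).
- lia.
- rewrite Hn in Hlt; have [e0 [He0 Hs0]] := IH #|[set xy : T * T | e'' xy.1 xy.2]| ltac:(lia) e'' erefl Hcc''.
  by exists e0; split => // u v /Hs0 /Hsub.
Qed.

Section Sub.
Variables (V W : finType) (eG : rel V) (p : W -> V) (s : V -> W).
Hypothesis Gs : simple_graph eG.
Hypothesis ps : forall v, p (s v) = v.

Notation f := (fun F => substitute_cliques F p).
Definition gg (F : rel W) : rel V := fun u v =>
  (u != v) && [exists x, exists y, (p x == u) && (p y == v) && F x y].

Lemma sc_sym F : symmetric F -> symmetric (substitute_cliques F p).
Proof. by move=> Fs x y; rewrite /substitute_cliques eq_sym Fs [p y == _]eq_sym. Qed.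

Lemma sc_irr F : irreflexive (substitute_cliques F p).
Proof. by move=> x; rewrite /substitute_cliques eqxx. Qed.

Lemma sc_mono F1 F2 : subrel F1 F2 -> subrel (substitute_cliques F1 p) (substitute_cliques F2 p).
Proof.
move=> S x y; rewrite /substitute_cliques => /andP[-> /orP[->//|/S ->]]; by rewrite orbT.
Qed.

Lemma gg_mono F1 F2 : subrel F1 F2 -> subrel (gg F1) (gg F2).
Proof.
move=> S u v; rewrite /gg => /andP[-> /existsP[x /existsP[y /andP[/andP[h1 h2] /S h3]]]].
by apply/existsP; exists x; apply/existsP; exists y; rewrite h1 h2 h3.
Qed.

Lemma L1 F : symmetric F -> irreflexive F -> chordal F -> chordal (substitute_cliques F p).
Proof.
move=> Fs Fi Fc k c /ic_ncyc [c' Hc]; have Hc0 := Hc; case: Hc0 => [H4 Cinj Cadj].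
have Hp : forall i j, i < k -> j < k -> p (c' i) = p (c' j) -> i = j.
  move=> i j Hi Hj E; case: (eqVneq i j) => // Hij; exfalso.
  have Nc : c' i != c' j by apply/eqP => /Cinj E'; move: Hij; rewrite E' // eqxx.
  apply: (@twin_cyc _ _ k c' i j (sc_sym Fs) Hc) => //.
    by rewrite /substitute_cliques Nc E eqxx.
  move=> z h1 h2; rewrite /substitute_cliques E (eq_sym (c' i)) (eq_sym (c' j)) h1 h2 //.
apply: (@ncyc_not_chordal _ F k (fun n => p (c' n))) => //; split => //.
move=> i j Hi Hj; rewrite -Cadj //.
case: (eqVneq i j) => [->|Hij]; first by rewrite Fi sc_irr.
have Np : p (c' i) != p (c' j) by apply/eqP => /Hp; move: Hij => /eqP; tauto.
have Nc : c' i != c' j by apply: contraNneq Np => ->.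
by rewrite /substitute_cliques Nc (negbTE Np).
Qed.

Lemma L2 F : chordal (substitute_cliques F p) -> chordal F.
Proof.
move=> Hch k c /ic_ncyc [c' [H4 Cinj Cadj]].
apply: (@ncyc_not_chordal _ _ k (fun n => s (c' n)) _ Hch); split => //.
  by move=> i j Hi Hj /(congr1 p); rewrite !ps; apply: Cinj.
move=> i j Hi Hj; case: (eqVneq i j) => [->|Hij].
  by rewrite sc_irr /adjk; lia.
have Nc : c' i != c' j by apply/eqP => /Cinj; move: Hij => /eqP; tauto.
have Ns : s (c' i) != s (c' j) by apply: contraNneq Nc => /(congr1 p); rewrite !ps => ->.
by rewrite /substitute_cliques Ns !ps (negbTE Nc) Cadj.
Qed.


Notation H := (substitute_cliques eG p).

Lemma H_twin u v w : p u = p v -> w != u -> w != v -> H u w = H v w.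
Proof.
by move=> E h1 h2; rewrite /substitute_cliques E (eq_sym u) (eq_sym v) h1 h2.
Qed.

Lemma blown F : minimal_chordal_completion H F ->
  forall x x' z, p x = p x' -> x != x' -> z != x -> z != x' -> F x z = F x' z.
Proof.
move=> [[[Fs Fi] [HF Fc]] Fmin] x x' z E Hxx h1 h2.
have Kxx : F x x' by apply: HF; rewrite /substitute_cliques Hxx E eqxx.
have Hsym : symmetric H by apply: sc_sym; case: Gs.
have tw : forall u v, inA x x' u -> ~~ inA x x' v -> H u v -> F x v && F x' v.
  move=> u v iu; rewrite /inA negb_or => /andP[n1 n2] Huv.
  have Hxv : H x v.
    move: iu => /orP[/eqP<-//|/eqP Eu]; by rewrite (@H_twin x u v) // Eu.
  by rewrite !HF // -(@H_twin x x' v).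
have Hcc : chordal_completion H (shrink F x x').
  split; [split|split].
  - exact: shrink_sym.
  - by move=> u; apply/negP => /shrink_sub; rewrite Fi.
  - move=> u v Huv; rewrite /shrink (HF _ _ Huv) /=.
    apply/andP; split; apply/implyP => iu.
      by case: (boolP (inA x x' v)) => //= nv; exact: tw Huv.
    by case: (boolP (inA x x' u)) => //= nu; exact: (tw v u iu nu (etrans (Hsym v u) Huv)).
  - exact: shrink_chordal.
have Hmin := Fmin _ Hcc (@shrink_sub _ F x x').
apply/idP/idP => Hz.
- have := Hmin _ _ Hz; rewrite shrink_a // ?eq_sym //; by case/andP.
- have := Hmin _ _ Hz; rewrite shrink_a' // ?eq_sym //; by case/andP.
Qed.


Lemma gf F : simple_graph F -> gg (substitute_cliques F p) =2 F.
Proof.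
move=> [Fs Fi] u v; rewrite /gg.
case: (eqVneq u v) => [->|Huv] /=; first by rewrite Fi.
apply/existsP/idP.
  case=> x /existsP[y /andP[/andP[/eqP hx /eqP hy]]].
  by rewrite /substitute_cliques hx hy (negbTE Huv) => /andP[].
move=> Fuv; exists (s u); apply/existsP; exists (s v).
rewrite !ps !eqxx /substitute_cliques !ps (negbTE Huv) Fuv !andbT /=.
by apply: contraNneq Huv => /(congr1 p); rewrite !ps => ->.
Qed.

Lemma blown_eq F : minimal_chordal_completion H F -> F =2 substitute_cliques (gg F) p.
Proof.
move=> Hm; have Hm0 := Hm; case: Hm0 => [[[Fs Fi] [HF Fc]] _] x y.
rewrite /substitute_cliques /gg.
case: (eqVneq x y) => [->|Hxy] /=; first by rewrite Fi.
case: (eqVneq (p x) (p y)) => [E|Np] /=.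
  by apply: HF; rewrite /substitute_cliques Hxy E eqxx.
apply/idP/existsP => [Fxy|[x' /existsP[y' /andP[/andP[/eqP hx /eqP hy] F']]]].
  by exists x; apply/existsP; exists y; rewrite !eqxx.
have Fxy' : F x y'.
  case: (eqVneq x x') => [->//|nx].
  rewrite (@blown F Hm x x' y') //.
  - by apply: contraNneq Np => <-; rewrite hy.
  - by apply: contraTneq F' => ->; rewrite Fi.
have Hy'x : F y' x by rewrite Fs.
case: (eqVneq y' y) => [<-//|ny].
rewrite Fs -(@blown F Hm y' y x) //.
by apply: contraNneq Np => ->; rewrite hy.
Qed.

Lemma f_cc F : chordal_completion eG F -> chordal_completion H (substitute_cliques F p).
Proof.
move=> [[Fs Fi] [GF Fc]]; split; [split|split].
- exact: sc_sym.
- exact: sc_irr.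
- exact: sc_mono.
- exact: L1.
Qed.

Lemma g_cc F : minimal_chordal_completion H F -> chordal_completion eG (gg F).
Proof.
move=> Hm; have Hm0 := Hm; case: Hm0 => [[[Fs Fi] [HF Fc]] _].
split; [split|split].
- move=> u v; rewrite /gg eq_sym; congr (_ && _).
  apply/existsP/existsP => -[x /existsP[y /andP[/andP[h1 h2] h3]]];
  exists y; apply/existsP; exists x; by rewrite h1 h2 Fs h3.
- by move=> u; rewrite /gg eqxx.
- move=> u v Guv.
  have Huv : u != v by apply: contraTneq Guv => ->; case: Gs => _ ->.
  rewrite /gg Huv; apply/existsP; exists (s u); apply/existsP; exists (s v).
  rewrite !ps !eqxx /=; apply: HF; rewrite /substitute_cliques !ps Guv orbT andbT.
  by apply: contraNneq Huv => /(congr1 p); rewrite !ps => ->.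
- apply: L2; apply: chordal_ext Fc _; exact: blown_eq.
Qed.

End Sub.
Unset Implicit Arguments.
Theorem lemma3 (V W : finType) (eG : rel V) (p : W -> V) :
  simple_graph eG ->
  (forall v : V, exists x : W, p x = v) ->
  exists (f : rel V -> rel W) (g : rel W -> rel V),
    (forall F, minimal_chordal_completion eG F ->
               minimal_chordal_completion (substitute_cliques eG p) (f F)) /\
    (forall F, minimal_chordal_completion (substitute_cliques eG p) F ->
               minimal_chordal_completion eG (g F)) /\
    (forall F, minimal_chordal_completion eG F -> g (f F) =2 F) /\
    (forall F, minimal_chordal_completion (substitute_cliques eG p) F ->
               f (g F) =2 F).
Proof.
move=> Gs surj.
have exP : forall v, exists x, p x == v by move=> v; case: (surj v) => x <-; exists x.
pose s v := xchoose (exP v).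
have ps : forall v, p (s v) = v by move=> v; apply/eqP; exact: (xchooseP (exP v)).
exists (fun F => substitute_cliques F p), (gg p).
split; [|split; [|split]].
- move=> F [Fcc Fmin]; split; first exact: f_cc.
  move=> e'' Hcc'' Hsub.
  have [F0 [HF0 Hs0]] := exists_min Hcc''.
  have Hg := @g_cc _ _ eG p s Gs ps F0 HF0.
  have sub1 : subrel (gg p F0) F.
    move=> u v /(gg_mono Hs0) /(gg_mono Hsub); by rewrite (gf ps) //; case: Fcc.
  have sub2 := Fmin _ Hg sub1.
  move=> x y /(sc_mono sub2); rewrite -(blown_eq Gs HF0); exact: Hs0.
- move=> F' HF'; split; first exact: (@g_cc _ _ eG p s Gs ps).
  move=> F'' Hcc'' Hsub.
  have Hf := f_cc p Hcc''.
  have sub1 : subrel (substitute_cliques F'' p) F'.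
    by move=> x y /(sc_mono Hsub); rewrite -(blown_eq Gs HF').
  have sub2 := HF'.2 _ Hf sub1.
  move=> u v /(gg_mono sub2); rewrite (gf ps) //; by case: Hcc''.
- by move=> F [[Fs _] _] u v; rewrite (gf ps).
- by move=> F HF x y; rewrite -(blown_eq Gs HF).
Qed.
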